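(* If $f:[a,b]\to\mathbb F$ is $g$-continuous at $t\in[a,b]$, then the function $f^*:[a,b]\to\mathbb F$, $f^*(s)=f(s^* )$, is also $g$-continuous at $t$.
   Context: Let $g:\mathbb R\to\mathbb R$ be nondecreasing and left-continuous, $\mathbb F\in\{\mathbb R,\mathbb C\}$. $\Delta g(t)=g(t^+)-g(t)$, $D_g=\{t:\Delta g(t)>0\}$, $C_g=\{t: g\text{ constant on }(t-\varepsilon,t+\varepsilon)\text{ for some }\varepsilon>0\}=\bigcup_{n\in\Lambda}(a_n,b_n)$ (disjoint union of connected components), $N_g^-=\{a_n\}\setminus D_g$, $N_g^+=\{b_n\}\setminus D_g$. Fix $a<b$ with $a\notin N_g^-\cup D_g$, $b\notin D_g\cup C_g\cup N_g^+$. For $s\in[a,b]$, $s^*=s$ if $s\notin C_g$ and $s^*=b_n$ if $s\in(a_n,b_n)$. A function $u:D\subset\mathbb R\to\mathbb F$ is $g$-continuous at $t\in D$ if for every $\varepsilon>0$ there is $\delta>0$ with $|u(t)-u(s)|<\varepsilon$ for all $s\in D$ with $|g(t)-g(s)|<\delta$. *)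

(* Defs.v *)
From HB Require Import structures.
From mathcomp Require Import all_boot all_order all_algebra.
From mathcomp Require Import all_classical all_reals all_analysis.
Set Implicit Arguments. Unset Strict Implicit. Unset Printing Implicit Defensive.
Import Order.TTheory GRing.Theory Num.Theory.
Import numFieldNormedType.Exports.
Local Open Scope classical_set_scope.
Local Open Scope ring_scope.

Section Defs.
Variable R : realType.
Implicit Types (g : R -> R) (t s x y : R).

Definition nondecr g := forall x y, x <= y -> g x <= g y.
Definition left_cont g := forall t, (g x @[x --> t^'-]) --> (g t : R^o).

Definition Deltag g t : R := lim (g x @[x --> t^'+]) - g t.

Definition Dg g t : Prop := 0 < Deltag g t.

Definition Cg g t : Prop :=
  exists2 e : R, 0 < e & forall x y, `|x - t| < e -> `|y - t| < e -> g x = g y.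

(* left / right endpoints of the connected components (a_n,b_n) of the open set C_g *)
Definition Cg_left_end g x : Prop :=
  ~ Cg g x /\ exists2 e : R, 0 < e & forall y, x < y < x + e -> Cg g y.
Definition Cg_right_end g x : Prop :=
  ~ Cg g x /\ exists2 e : R, 0 < e & forall y, x - e < y < x -> Cg g y.

Definition Ngminus g x : Prop := Cg_left_end g x /\ ~ Dg g x.
Definition Ngplus g x : Prop := Cg_right_end g x /\ ~ Dg g x.

(* s^* : s if s \notin C_g, and b_n (right end of the component of C_g
   containing s) if s \in (a_n,b_n). *)
Definition gstar g s : R :=
  if pselect (Cg g s)
  then sup [set r : R | forall x, s <= x <= r -> Cg g x]
  else s.

Definition g_continuous_at (F : numFieldType) g (D : set R) (u : R -> F) t : Prop :=
  forall eps : F, 0 < eps -> exists2 delta : R, 0 < delta &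
    forall s, D s -> `|g t - g s| < delta -> `|u t - u s| < eps.

End Defs.

(* Main.v *)
Require Import Defs.
From HB Require Import structures.
From mathcomp Require Import all_boot all_order all_algebra.
From mathcomp Require Import all_classical all_reals all_analysis.
Import Order.TTheory GRing.Theory Num.Theory.
Import numFieldNormedType.Exports.
Local Open Scope classical_set_scope.
Local Open Scope ring_scope.

Lemma gconst (R : realType) (g : R -> R) s x m :
  (forall y, s <= y < m -> Cg g y) -> s <= x -> x < m -> g x = g s.
Proof.
move=> HC hsx hxm.
pose A := [set y | s <= y <= x /\ g y = g s].
have As : A s by split; [rewrite lexx hsx | ].
have hA : has_sup A by split; [exists s | exists x => y [/andP[_ ->]]].
set c := sup A.
have sc : s <= c by exact: sup_upper_bound.
have cx : c <= x by apply: ge_sup; [exists s | move=> y [/andP[_ ->]]].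
have [e e0 He] := HC c ltac:(rewrite sc /=; exact: le_lt_trans cx hxm).
have [y [/andP[sy yx] gy] cy] := sup_adherent e0 hA.
have yc : y <= c by apply: sup_upper_bound => //; split => //; rewrite sy yx.
have gc : g c = g s.
  rewrite -gy; apply: He; first by rewrite subrr normr0.
  by rewrite ler0_norm ?subr_le0 // opprB ltrBlDl addrC -ltrBlDl.
have [cx'|] := ltP c x; last first.
  by move=> xc; have -> : x = c by apply/eqP; rewrite eq_le cx xc.
pose z := Num.min (c + e / 2) x.
have cz : c < z by rewrite lt_min cx' ltrDl divr_gt0.
have : z <= c.
  apply: sup_upper_bound => //; split.
    by rewrite ge_min lexx orbT andbT (le_trans sc) // ltW.
  rewrite -gc; apply: He; last by rewrite subrr normr0.
  have zc : z <= c + e / 2 by rewrite /z ge_min lexx.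
  rewrite gtr0_norm ?subr_gt0 // ltrBlDl (le_lt_trans zc) //.
  by rewrite ltrD2l ltr_pdivrMr // ltr_pMr // ltr1n.
by rewrite leNgt cz.
Qed.

Lemma gstar_prop (R : realType) (g : R -> R) (a b : R)
  (hg_left : left_cont g) (hb : ~ Cg g b) s :
  s \in `[a, b] -> gstar g s \in `[a, b] /\ g (gstar g s) = g s.
Proof.
rewrite /gstar; case: pselect => // Cs; rewrite in_itv /= => /andP[as_ sb].
set S := [set r | forall x, s <= x <= r -> Cg g x].
have Ss : S s by move=> x /andP[h1 h2]; have -> : x = s by apply/eqP; rewrite eq_le h1 h2.
have ubS : ubound S b.
  move=> r Sr; rewrite leNgt; apply/negP => br; apply: hb; apply: Sr.
  by rewrite sb ltW.
have hS : has_sup S by split; [exists s | exists b].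
set m := sup S.
have sm : s <= m by exact: sup_upper_bound.
have mb : m <= b by apply: ge_sup => //; exists s.
have HC : forall y, s <= y < m -> Cg g y.
  move=> y /andP[sy ym].
  have my : 0 < m - y by rewrite subr_gt0.
  have [r Sr mr] := sup_adherent my hS.
  have yr : y < r by move: mr; rewrite opprB addrC subrK.
  by apply: Sr; rewrite sy /= ltW.
split; first by rewrite in_itv /= (le_trans as_ sm) mb.
have [sm'|] := ltP s m; last first.
  by move=> ms; have -> : m = s by apply/eqP; rewrite eq_le ms sm.
apply/eqP; rewrite -subr_eq0 -normr_eq0; apply/eqP.
apply/eqP; rewrite eq_le normr_ge0 andbT; apply/ler_addgt0Pr => eps eps0.
rewrite add0r.
have := hg_left m; move/cvgrPdist_lt => /(_ eps eps0) Hn.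
have [x [[Hx1 Hx2] Hx3]] : exists x, ((s < x /\ x < m) /\ `|g m - g x| < eps).
  apply: (@filter_ex _ (m^'-)); apply: filterI; last by move: Hn; apply: filterS.
  apply: filterI; [exact: nbhs_left_gt | exact: nbhs_left_lt].
rewrite (@gconst R g s x m HC (ltW Hx1) Hx2) in Hx3.
by apply: ltW.
Qed.

Theorem proposition5p1 (R : realType) (F : numFieldType) (g : R -> R) (a b : R)
  (hg_mono : nondecr g) (hg_left : left_cont g) (hab : a < b)
  (ha : ~ (Ngminus g a \/ Dg g a))
  (hb : ~ (Dg g b \/ Cg g b \/ Ngplus g b))
  (f : R -> F) (t : R) (ht : t \in `[a, b]) :
  g_continuous_at g `[a, b] f t ->
  g_continuous_at g `[a, b] (fun s => f (gstar g s)) t.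
Proof.
have hb' : ~ Cg g b by move=> h; apply: hb; right; left.
move=> hf eps heps; have [d d0 H] := hf eps heps.
exists d => // s Ds hgs.
have [ts gts] := @gstar_prop R g a b hg_left hb' t ht.
have [ss gss] := @gstar_prop R g a b hg_left hb' s Ds.
have -> : f (gstar g t) = f t.
  case: (eqVneq (f (gstar g t)) (f t)) => // h.
  have h0 : 0 < `|f (gstar g t) - f t| by rewrite normr_gt0 subr_eq0.
  have [d' d'0 H'] := hf _ h0.
  have := H' _ ts; rewrite gts subrr normr0 => /(_ d'0).
  by rewrite distrC ltxx.
by apply: H => //; rewrite gss.
Qed.
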